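(* There exists a family of MDPs $(\mathcal{M}_n)_{n\ge1}$ such that for each $n$ there are a trace $\tau$ and a state-risk function $r$ of $\mathcal{M}_n$ such that, with $B:=V(\mathsf{est}_{\mathsf{MDP}}(\tau))$, we have $|B|=2^n$, and for every $\mathsf{bel}\in B$ there exists $\tau'\in\mathsf{Z}^+$ with $R_r(\tau\cdot\tau')>\sup_{\mathsf{bel}''\in B'}\sum_{s}\mathsf{bel}''(s)\cdot r(s)$, where $B'=\mathsf{est}^{\mathsf{up}}(B\setminus\{\mathsf{bel}\},\tau')$.
   Context: An MDP is a tuple $\langle S,\iota,\mathsf{Act},P,\mathsf{Z},\mathsf{obs}\rangle$: finite state set $S$, initial distribution $\iota\in\mathsf{Distr}(S)$, finite action set $\mathsf{Act}$, partial transition function $P\colon S\times\mathsf{Act}\rightharpoonup\mathsf{Distr}(S)$ (write $P(s,\alpha,s')=P(s,\alpha)(s')$), finite observation set $\mathsf{Z}$, observation function $\mathsf{obs}\colon S\to\mathsf{Distr}(\mathsf{Z})$; $\mathsf{AvAct}(s)=\{\alpha\mid P(s,\alpha)\text{ defined}\}\neq\emptyset$. A finite path is $\pi=s_0a_0\dots a_{n-1}s_n$ with $\iota(s_0)>0$, $P(s_i,a_i)(s_{i+1})>0$; $\mathrm{last}(\pi)=s_n$. A scheduler $\sigma$ maps each finite path $\pi$ to a distribution on $\mathsf{AvAct}(\mathrm{last}(\pi))$; $\Sigma$ is the set of schedulers; $\Pr^\sigma(\pi)=\iota(s_0)\prod_{i<n}\sigma(s_0a_0\dots s_i)(a_i)P(s_i,a_i)(s_{i+1})$.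 For a trace $\tau=z_0\dots z_n$ and path $\pi=s_0\dots s_m$, $\Pr(\tau\mid\pi)=\prod_{i=0}^n\mathsf{obs}(s_i)(z_i)$ if $m=n$, else $0$; $\mathrm{Paths}(\tau)$ are the paths with as many states as $\tau$ has observations; $\Pr^\sigma(\tau)=\sum_\pi\Pr^\sigma(\pi)\Pr(\tau\mid\pi)$; $\Pr^\sigma(\pi\mid\tau)=\Pr(\tau\mid\pi)\Pr^\sigma(\pi)/\Pr^\sigma(\tau)$ ($0/0=0$). For $r\colon S\to\mathbb{R}_{\ge0}$, $R_r(\tau)=\sup_{\sigma\in\Sigma}\sum_{\pi\in\mathrm{Paths}(\tau)}\Pr^\sigma(\pi\mid\tau)r(\mathrm{last}(\pi))$. Beliefs: $\mathsf{Bel}=\mathsf{Distr}(S)\cup\{\mathbf{0}\}$ in $\mathbb{R}^S$. For $\mathsf{bel}\in\mathsf{Bel}$, $z\in\mathsf{Z}$: $\mathsf{bel}'\in\mathsf{est}^{\mathsf{up}}(\mathsf{bel},z)$ iff there is $\varsigma\colon S\to\mathsf{Distr}(\mathsf{Act})$ with $\varsigma(s)$ supported in $\mathsf{AvAct}(s)$ and $\mathsf{bel}'(s')=\dfrac{\sum_s\mathsf{bel}(s)\sum_\alpha\varsigma(s)(\alpha)P(s,\alpha,s')\mathsf{obs}(s')(z)}{\sum_s\mathsf{bel}(s)\sum_\alpha\varsigma(s)(\alpha)\sum_{\hat s}P(s,\alpha,\hat s)\mathsf{obs}(\hat s)(z)}$ ($0/0=0$); for sets, $\mathsf{est}^{\mathsf{up}}(B,z)=\bigcup_{\mathsf{bel}\in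 B}\mathsf{est}^{\mathsf{up}}(\mathsf{bel},z)$, and for traces $\mathsf{est}^{\mathsf{up}}(B,z\cdot\tau'')=\mathsf{est}^{\mathsf{up}}(\mathsf{est}^{\mathsf{up}}(B,z),\tau'')$. $\mathsf{est}_{\mathsf{MDP}}(z)=\{b_z\}$ with $b_z(s)=\iota(s)\mathsf{obs}(s)(z)/\sum_{\hat s}\iota(\hat s)\mathsf{obs}(\hat s)(z)$ (or $\mathbf{0}$ if the denominator is $0$), $\mathsf{est}_{\mathsf{MDP}}(\tau\cdot z)=\mathsf{est}^{\mathsf{up}}(\mathsf{est}_{\mathsf{MDP}}(\tau),z)$. $V(B)$ is the set of elements of $B$ that are not convex combinations of other elements of $B$. *)

(* Defs.v *)
From HB Require Import structures.
From mathcomp Require Import all_boot all_order all_algebra.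
From mathcomp Require Import boolp classical_sets cardinality reals.
Set Implicit Arguments. Unset Strict Implicit. Unset Printing Implicit Defensive.
Import Order.TTheory GRing.Theory Num.Theory.
Local Open Scope ring_scope.
Local Open Scope classical_set_scope.

Section MDPDefs.
Variable R : realType.

Definition is_distr (T : finType) (f : T -> R) : Prop :=
  (forall x, 0 <= f x) /\ \sum_(x : T) f x = 1.

(* An MDP <S, iota, Act, P, Z, obs> over finite types S, Act, Z.
   The partial transition function is P : S -> Act -> option (S -> R). *)
Record mdp (S Act Z : finType) := MDP {
  iota : S -> R;
  trans : S -> Act -> option (S -> R);
  obs : S -> Z -> R;
  iota_distr : is_distr iota;
  trans_distr : forall s a d, trans s a = Some d -> is_distr d;
  obs_distr : forall s, is_distr (obs s);
  avact_nonempty : forall s, exists a, trans s a <> None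
}.

Record MDPpack := Pack {
  pS : finType; pAct : finType; pZ : finType;
  pM : mdp pS pAct pZ
}.

Context {S Act Z : finType} (M : mdp S Act Z).

Definition avail (s : S) (a : Act) : Prop := trans M s a <> None.

(* P(s, a, s'), where defined (0 otherwise; only used where defined) *)
Definition Pt (s : S) (a : Act) (s' : S) : R :=
  if trans M s a is Some d then d s' else 0.

(* A finite path s0 a0 s1 ... a_{n-1} s_n is encoded as (s0, [(a0,s1);...;(a_{n-1},s_n)]) *)
Definition plast (s0 : S) (steps : seq (Act * S)) : S := last s0 (map snd steps).

Fixpoint valid_steps (cur : S) (steps : seq (Act * S)) : Prop :=
  match steps with
  | [::] => True
  | (a, s') :: rest => avail cur a /\ 0 < Pt cur a s' /\ valid_steps s' rest
  end.

Definition is_path (s0 : S) (steps : seq (Act * S)) : Prop :=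
  0 < iota M s0 /\ valid_steps s0 steps.

Definition scheduler := S -> seq (Act * S) -> Act -> R.

Definition is_scheduler (sigma : scheduler) : Prop :=
  forall s0 steps, is_path s0 steps ->
    is_distr (sigma s0 steps) /\
    (forall a, 0 < sigma s0 steps a -> avail (plast s0 steps) a).

Fixpoint pr_aux (sigma : scheduler) (s0 : S) (pre : seq (Act * S)) (cur : S)
    (rest : seq (Act * S)) : R :=
  match rest with
  | [::] => 1
  | (a, s') :: rest' =>
      sigma s0 pre a * Pt cur a s' * pr_aux sigma s0 (rcons pre (a, s')) s' rest'
  end.

Definition pr_path (sigma : scheduler) (s0 : S) (steps : seq (Act * S)) : R :=
  iota M s0 * pr_aux sigma s0 [::] s0 steps.

Definition pr_trace_given_path (tau : seq Z) (s0 : S) (steps : seq (Act * S)) : R :=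
  match tau with
  | [::] => 0
  | z0 :: _ =>
      if size tau == (size steps).+1 then
        \prod_(i < size tau) obs M (nth s0 (s0 :: map snd steps) i) (nth z0 tau i)
      else 0
  end.

(* Paths(tau): the (finitely many) paths with as many states as tau has
   observations, encoded as (s0, steps) with steps of length |tau|-1 *)
Definition pathsT (tau : seq Z) := (S * ((size tau).-1).-tuple (Act * S))%type.

Definition pr_trace (sigma : scheduler) (tau : seq Z) : R :=
  \sum_(p : pathsT tau | `[< is_path p.1 p.2 >])
     pr_path sigma p.1 p.2 * pr_trace_given_path tau p.1 p.2.

(* Pr^sigma(pi | tau), with 0/0 = 0 (MathComp: x / 0 = 0) *)
Definition pr_path_given_trace (sigma : scheduler) (tau : seq Z)
    (s0 : S) (steps : seq (Act * S)) : R :=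
  pr_trace_given_path tau s0 steps * pr_path sigma s0 steps / pr_trace sigma tau.

Definition Rr (r : S -> R) (tau : seq Z) : R :=
  sup [set x | exists sigma, is_scheduler sigma /\
        x = \sum_(p : pathsT tau | `[< is_path p.1 p.2 >])
              pr_path_given_trace sigma tau p.1 p.2 * r (plast p.1 p.2)].

Definition belief := S -> R.
Definition is_belief (b : belief) : Prop := is_distr b \/ b = (fun _ => 0).

Definition est_up1 (bel : belief) (z : Z) : set belief :=
  [set bel' | exists vs : S -> Act -> R,
     (forall s, is_distr (vs s) /\ (forall a, 0 < vs s a -> avail s a)) /\
     forall s',
       bel' s' =
         (\sum_(s : S) bel s * \sum_(a : Act) vs s a * Pt s a s' * obs M s' z) /
         (\sum_(s : S) bel s * \sum_(a : Act) vs s a *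
              \sum_(sh : S) Pt s a sh * obs M sh z)].

Definition est_up_set (B : set belief) (z : Z) : set belief :=
  \bigcup_(b in B) est_up1 b z.

Definition est_up (B : set belief) (tau : seq Z) : set belief :=
  foldl est_up_set B tau.

Definition b_init (z : Z) : belief :=
  fun s => iota M s * obs M s z / \sum_(sh : S) iota M sh * obs M sh z.

Definition est_MDP (tau : seq Z) : set belief :=
  match tau with
  | [::] => set0 (* traces are non-empty; unused *)
  | z :: tau' => est_up [set b_init z] tau'
  end.

End MDPDefs.

Definition convex_comb (R : realType) (S : finType) (b : S -> R) (C : set (S -> R)) : Prop :=
  exists (k : nat) (f : 'I_k -> S -> R) (w : 'I_k -> R),
    (forall i, C (f i)) /\ (forall i, 0 <= w i) /\ \sum_(i < k) w i = 1 /\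
    forall s, b s = \sum_(i < k) w i * f i s.

Definition Vext (R : realType) (S : finType) (B : set (S -> R)) : set (S -> R) :=
  [set b | B b /\ ~ convex_comb b (B `\ b)].

(* Main.v *)
Require Import Defs.
From HB Require Import structures.
From mathcomp Require Import all_boot all_order all_algebra.
From mathcomp Require Import boolp classical_sets cardinality reals.
From mathcomp Require Import lra.
Set Implicit Arguments. Unset Strict Implicit. Unset Printing Implicit Defensive.
Import Order.TTheory GRing.Theory Num.Theory.
Local Open Scope ring_scope.
Local Open Scope classical_set_scope.

Section Cons.
Variable R : realType.

Lemma sum_delta (T : finType) (c : T) (F : T -> R) :
  \sum_(x : T) (x == c)%:R * F x = F c.
Proof.
rewrite (bigD1 c) //= eqxx mul1r big1 ?addr0 // => x /negbTE ->.
by rewrite mul0r.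
Qed.

Lemma sum_delta1 (T : finType) (c : T) : \sum_(x : T) ((x == c)%:R : R) = 1.
Proof. by rewrite -[RHS](sum_delta c (fun=> 1)); apply: eq_bigr=> x _; rewrite mulr1. Qed.

Variable N : nat.
Hypothesis hN : (0 < N)%N.

Definition St := option 'I_N.
Definition iotaF (s : St) : R := (s == None)%:R.
Definition tgt (s : St) (a : 'I_N) : St := Some (if s is Some j then j else a).
Definition transF (s : St) (a : 'I_N) : option (St -> R) :=
  Some (fun s' => (s' == tgt s a)%:R).
Definition obsF (s : St) (z : St) : R :=
  if s is Some j then ((z == None)%:R + (z == Some j)%:R) / 2 else (z == None)%:R.

Lemma iota_d : is_distr iotaF.
Proof. by split; [move=> x; exact: ler0n | exact: sum_delta1]. Qed.

Lemma trans_d s a d : transF s a = Some d -> is_distr d.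
Proof. by case=> <-; split; [move=> x; exact: ler0n | exact: sum_delta1]. Qed.

Lemma obs_ge0 s z : 0 <= obsF s z.
Proof.
case: s => [j|] /=; last exact: ler0n.
by apply: divr_ge0; [apply: addr_ge0; exact: ler0n | exact: ler0n].
Qed.

Lemma obs_d s : is_distr (obsF s).
Proof.
split; first exact: obs_ge0.
case: s => [j|] /=; last exact: sum_delta1.
rewrite -big_distrl big_split /= !sum_delta1 /=.
by apply: divff; apply/eqP; lra.
Qed.

Lemma av s : exists a, transF s a <> None.
Proof. by exists (Ordinal hN). Qed.

Definition Mdp : mdp R St 'I_N St := MDP iota_d trans_d obs_d av.

Lemma Pt_eq s a s' : Pt Mdp s a s' = (s' == tgt s a)%:R.
Proof. by []. Qed.

Lemma avail_all s a : avail Mdp s a.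
Proof. by []. Qed.

Lemma obsSN j : obsF (Some j) None = 2^-1.
Proof. by rewrite /obsF /= addr0 mul1r. Qed.

Lemma Some_eq (j k : 'I_N) : (Some j == Some k :> St) = (j == k).
Proof. by []. Qed.


Definition D (b : St -> R) : Prop := b None = 0 /\ is_distr (fun j : 'I_N => b (Some j)).

Lemma binitE : b_init Mdp None = fun s => (s == None)%:R.
Proof.
apply: funext => s; rewrite /b_init /=.
rewrite (sum_delta None (fun sh => obsF sh None)) /= divr1.
by case: s => [j|] /=; rewrite ?mul0r ?mul1r.
Qed.

Lemma upd0 (vs : St -> 'I_N -> R) (hv : \sum_a vs None a = 1) s' :
 (\sum_(s : St) (b_init Mdp None) s * \sum_(a : 'I_N) vs s a * Pt Mdp s a s' * obs Mdp s' None) /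
 (\sum_(s : St) (b_init Mdp None) s * \sum_(a : 'I_N) vs s a * \sum_(sh : St) Pt Mdp s a sh * obs Mdp sh None)
 = if s' is Some j then vs None j else 0.
Proof.
rewrite binitE !(sum_delta None (fun s => \sum_a _)) /=.
have -> : \sum_(a : 'I_N) vs None a * \sum_(sh : St) Pt Mdp None a sh * obsF sh None
   = 2^-1.
  rewrite (eq_bigr (fun a => vs None a * 2^-1)); first by rewrite -big_distrl /= hv mul1r.
  move=> a _; congr (_ * _); under eq_bigr do rewrite Pt_eq.
  by rewrite (sum_delta (tgt None a) (fun sh => obsF sh None)) obsSN.
case: s' => [j|]; last first.
  by rewrite big1 ?mul0r // => a _; rewrite Pt_eq /= mulr0 mul0r.
rewrite obsSN -big_distrl /=.
rewrite (eq_bigr (fun a => (a == j)%:R * vs None a)); last first.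
  by move=> a _; rewrite Pt_eq /tgt Some_eq eq_sym mulrC.
by rewrite sum_delta invrK divfK //; apply/eqP; lra.
Qed.

Lemma estD b : est_MDP Mdp [:: None; None] b <-> D b.
Proof.
rewrite /est_MDP /est_up /= /est_up_set; split.
  case=> b0 -> [vs [hvs hb]].
  have hv : \sum_a vs None a = 1 by case: (hvs None) => [[_ ->]].
  split; first by rewrite hb upd0.
  split; first by move=> j; rewrite hb upd0; case: (hvs None) => [[hp _] _].
  by rewrite -[RHS]hv; apply: eq_bigr => j _; rewrite hb upd0.
case=> hb0 [hb1 hb2]; exists (b_init Mdp None) => //.
exists (fun _ a => b (Some a)); split.
  by move=> s; split => // a _; exact: avail_all.
by move=> s'; rewrite upd0 //; case: s'.
Qed.

Definition dl (j : 'I_N) : St -> R := fun s => (s == Some j)%:R.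

Lemma D_dl j : D (dl j).
Proof.
split => //; split; first by move=> k; exact: ler0n.
by rewrite -(sum_delta1 j); apply: eq_bigr => k _; rewrite /dl Some_eq.
Qed.

Lemma D_split b j : D b -> b (Some j) + \sum_(k | k != j) b (Some k) = 1.
Proof. by rewrite /D => -[_ [_ h]]; rewrite -h [RHS](bigD1 j). Qed.

Lemma D_le1 b j : D b -> b (Some j) <= 1.
Proof.
move=> hb; rewrite -(D_split j hb) lerDl sumr_ge0 // => k _.
by case: hb => _ [+ _]; apply.
Qed.

Lemma D_eq1 b j : D b -> b (Some j) = 1 -> b = dl j.
Proof.
move=> hb h1; have hs := D_split j hb.
have h0 : \sum_(k | k != j) b (Some k) = 0 by move: hs; rewrite h1; lra.
have := psumr_eq0P _ h0; case: hb => hN0 [hp _].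
move=> /(_ (fun k _ => hp k)) hz.
apply: funext => -[k|]; rewrite /dl //=.
rewrite Some_eq; have [->|/hz ->] := eqVneq k j; by rewrite ?h1.
Qed.

Lemma VextE b : Vext D b <-> exists j, b = dl j.
Proof.
split.
  case=> hb hnc; apply: contrapT => hne; apply: hnc.
  exists N, dl, (fun j => b (Some j)); split.
    move=> i; split; first exact: D_dl.
    by move=> /= ei; apply: hne; exists i.
  split; first by case: hb => _ [+ _].
  split; first by case: hb => _ [_ +].
  move=> [s|]; last first.
    by case: hb => -> _; rewrite big1 // => i _; rewrite /dl /= mulr0.
  rewrite (eq_bigr (fun i => (i == s)%:R * b (Some i))) ?sum_delta //.
  by move=> i _; rewrite /dl Some_eq eq_sym mulrC.
case=> j ->; split; first exact: D_dl.
case=> k [f [w [hf [hw [hw1 hc]]]]].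
have hj := hc (Some j); rewrite /dl eqxx in hj.
have hle : forall i, 0 <= w i * (1 - f i (Some j)).
  move=> i; apply: mulr_ge0 => //; rewrite subr_ge0; apply: D_le1.
  by case: (hf i).
have hz : \sum_(i < k) w i * (1 - f i (Some j)) = 0.
  under eq_bigr do rewrite mulrBr mulr1.
  by rewrite sumrB hw1 -hj subrr.
have := psumr_eq0P (P := xpredT) (fun i _ => hle i) hz => hz'.
have [i hi] : exists i, w i != 0.
  apply: contrapT => hne; move: hw1; rewrite big1 => [/eqP|i _]; first by rewrite eq_sym oner_eq0.
  by apply: contrapT => h; apply: hne; exists i; apply/eqP.
move: (hz' i erefl) => /eqP; rewrite mulf_eq0 (negbTE hi) /= subr_eq0 => /eqP h1.
case: (hf i) => hfi hne; apply: hne.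
exact: D_eq1.
Qed.

Definition dlN (k : nat) : St -> R := fun s => (if s is Some j then val j == k else false)%:R.

Lemma dlE j : dl j = dlN (val j).
Proof. by apply: funext => -[s|]. Qed.

Lemma card_V : (Vext D #= `I_N)%card.
Proof.
have -> : Vext D = [set dlN k | k in `I_N].
  apply/seteqP; split => b.
    move/VextE => [j ->]; exists (val j); [exact: ltn_ord | by rewrite dlE].
  case=> k hk <-; apply/VextE; exists (@Ordinal N k hk); by rewrite dlE.
apply: inj_card_eq => k1 k2; rewrite !inE /= => hk1 hk2 he.
have := congr1 (fun f => f (Some (Ordinal hk1))) he; rewrite /dlN /= eqxx.
by case: (k1 =P k2) => // _ /eqP; rewrite oner_eq0.
Qed.

Lemma upd_zero k j b'' : k != j -> est_up1 Mdp (dl k) (Some j) b'' -> forall s, b'' s = 0.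
Proof.
move=> hkj [vs [_ hb]] s; rewrite hb.
rewrite [X in _ / X]big1 ?invr0 ?mulr0 // => s0 _.
rewrite /dl; case: eqP => [->|_]; last by rewrite mul0r.
rewrite mul1r big1 // => a _; rewrite big1 ?mulr0 // => sh _.
rewrite Pt_eq /tgt; case: eqP => [->|_]; last by rewrite mul0r.
by rewrite /= Some_eq eq_sym (negbTE hkj) addr0 mul0r mulr0.
Qed.

Definition sigj (j : 'I_N) : St -> seq ('I_N * St) -> 'I_N -> R := fun _ _ a => (a == j)%:R.

Lemma sigj_ok j : is_scheduler Mdp (sigj j).
Proof.
move=> s0 steps _; split; last by move=> a _; exact: avail_all.
by split; [move=> a; exact: ler0n | exact: sum_delta1].
Qed.

Lemma pr_aux_ge0 (sg : St -> seq ('I_N * St) -> 'I_N -> R) : (forall s0 pre a, 0 <= sg s0 pre a) ->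
  forall s0 rest pre cur, 0 <= pr_aux Mdp sg s0 pre cur rest.
Proof.
move=> hs s0; elim=> [|[a s'] rest IH] pre cur /=; first exact: ler01.
by apply: mulr_ge0 => //; apply: mulr_ge0 => //; rewrite Pt_eq ler0n.
Qed.

Lemma tgp_ge0 tau s0 steps : 0 <= pr_trace_given_path Mdp tau s0 steps.
Proof.
rewrite /pr_trace_given_path; case: tau => [|z0 t] //; case: ifP => // _.
by apply: prodr_ge0 => i _; exact: obs_ge0.
Qed.

Lemma trace_pos j : 0 < pr_trace Mdp (sigj j) [:: None; None; Some j].
Proof.
pose pst : St * 2.-tuple ('I_N * St) := (None, [tuple (j, Some j); (j, Some j)]).
rewrite /pr_trace (bigD1 pst); last first.
  apply/asboolP; split; first by rewrite /= ltr01.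
  by split; [exact: avail_all | split; [rewrite Pt_eq /= eqxx ltr01|]] ; split; [exact: avail_all | split; [rewrite Pt_eq /= eqxx ltr01|]].
have h2 : 0 <= \sum_(i : St * 2.-tuple ('I_N * St) | `[< is_path Mdp i.1 i.2 >] && (i != pst))
     pr_path Mdp (sigj j) i.1 i.2 * pr_trace_given_path Mdp [:: None; None; Some j] i.1 i.2.
  apply: sumr_ge0 => p _; apply: mulr_ge0; last exact: tgp_ge0.
  apply: mulr_ge0; first exact: ler0n.
  by apply: pr_aux_ge0 => *; exact: ler0n.
set t := (X in 0 < X + _).
have h1 : 0 < t.
  rewrite /t /pr_path /pr_trace_given_path /= !big_ord_recr big_ord0 /=.
  rewrite !Pt_eq /sigj /tgt /iotaF /= !eqxx; rewrite (_ : true%:R = 1 :> R) //; lra.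
lra.
Qed.

Lemma ratio (sg : scheduler R) tau :
 \sum_(p : St * ((size tau).-1).-tuple ('I_N * St) | `[< is_path Mdp p.1 p.2 >])
    pr_path_given_trace Mdp sg tau p.1 p.2 * (fun _ : St => (1:R)) (plast p.1 p.2)
 = pr_trace Mdp sg tau / pr_trace Mdp sg tau.
Proof.
rewrite /pr_trace big_distrl /=; apply: eq_bigr => p _.
by rewrite /pr_path_given_trace mulr1 (mulrC (pr_trace_given_path _ _ _ _)).
Qed.

Lemma Rr_ge1 (sg : scheduler R) tau : is_scheduler Mdp sg -> 0 < pr_trace Mdp sg tau ->
  1 <= Rr Mdp (fun _ => 1) tau.
Proof.
move=> hs hp; rewrite /Rr; apply: sup_upper_bound; last first.
  by exists sg; split => //; rewrite ratio divff // gt_eqF.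
split.
  by exists 1; exists sg; split => //; rewrite ratio divff // gt_eqF.
exists 1 => x [sg' [_ ->]]; rewrite ratio.
have [->|h] := eqVneq (pr_trace Mdp sg' tau) 0; first by rewrite mul0r ler01.
by rewrite divff.
Qed.

Lemma sup_le0 (E : set R) : (forall x, E x -> x = 0) -> sup E <= 0.
Proof.
move=> h; have [->|/set0P hne] := eqVneq E set0; first by rewrite sup0.
apply: ge_sup => //.
by move=> x /h ->.
Qed.
End Cons.

Lemma pos2n n : (0 < 2 ^ n)%N.
Proof. by rewrite expn_gt0. Qed.

Local Open Scope card_scope.

Theorem theorem3 (R : realType) :
  exists F : nat -> MDPpack R,
    forall n : nat, (1 <= n)%N ->
      exists (tau : seq (pZ (F n))) (r : pS (F n) -> R),
        tau <> [::] /\ (forall s, 0 <= r s) /\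
        let M := pM (F n) in
        let B := Vext (est_MDP M tau) in
        B #= `I_(2 ^ n) /\
        forall bel, B bel ->
          exists tau' : seq (pZ (F n)), tau' <> [::] /\
            let B' := est_up M (B `\ bel) tau' in
            sup [set x | exists b'', B' b'' /\ x = \sum_(s : pS (F n)) b'' s * r s]
              < Rr M r (tau ++ tau').
Proof.
exists (fun n => Pack (Mdp R (pos2n n))).
move=> n hn /=.
exists [:: None; None], (fun _ => 1).
split => //; split; first by move=> _; exact: ler01.
have hE : est_MDP (Mdp R (pos2n n)) [:: None; None] = D (R:=R) (N:=2^n)
  := funext (fun b => propext (estD (pos2n n) b)).
rewrite hE; split; first exact: card_V.
move=> bel /VextE [j ->].
exists [:: Some j]; split => //.
apply: (le_lt_trans (sup_le0 _)).
  move=> x [b'' [[b [hb hne] hup] ->]].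
  move/VextE: hb => [k hk]; subst b.
  have hkj : k != j by apply/eqP => hkj; apply: hne; rewrite hkj.
  by rewrite big1 // => s _; rewrite (upd_zero hkj hup) mul0r.
have h1 := Rr_ge1 (@sigj_ok R _ (pos2n n) j) (trace_pos R (pos2n n) j).
apply: lt_le_trans h1.
exact: ltr01.
Qed.
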